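(* The linear operator $\widetilde{\mathcal{V}}:\mathbb{R}^{p\times q}\to\mathbb{R}^{p\times q}$ defined by $$\widetilde{\mathcal{V}}:=\mathcal{I}+\sigma\mathcal{G}+\sigma\mathcal{A}^*_{\mathcal{J}_1}\mathcal{A}_{\mathcal{J}_1}-\sigma^2(\sigma|\mathcal{J}_1|+\rho)^{-1}\mathcal{A}^*_{\mathcal{J}_1}y_{\mathcal{J}_1}y^\top_{\mathcal{J}_1}\mathcal{A}_{\mathcal{J}_1}$$ (where the last two terms are absent if $\mathcal{J}_1=\emptyset$) is self-adjoint and positive definite.
   Context: Data: $X_1,\dots,X_n\in\mathbb{R}^{p\times q}$, $y=(y_1,\dots,y_n)^\top\in\{-1,+1\}^n$, $C>0$, $\tau>0$. $\mathcal{A}W=(\langle y_1X_1,W\rangle,\dots,\langle y_nX_n,W\rangle)^\top$ with $\langle X,Y\rangle=\operatorname{tr}(X^\top Y)$. For $\mathcal{I}'\subseteq\{1,\dots,n\}$, $\mathcal{A}_{\mathcal{I}'}W:=(\mathcal{A}W)_{\mathcal{I}'}$ (the subvector indexed by $\mathcal{I}'$) and $\mathcal{A}^*_{\mathcal{I}'}z:=\sum_{j\in\mathcal{I}'}z_jy_jX_j$; $y_{\mathcal{I}'}$ is the corresponding subvector of $y$. $S=[0,C]^n$, $\mathbb{B}_2^\tau=\{X:\|X\|_2\le\tau\}$ (spectral norm). Fix $\lambda^k\in\mathbb{R}^n$, $\Lambda^k\in\mathbb{R}^{p\times q}$, $\sigma>0$, $\rho\ge0$, and $(\widetilde{W},\widetilde{b})\in\mathbb{R}^{p\times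 q}\times\mathbb{R}$; let $\omega:=-\lambda^k-\sigma(\mathcal{A}\widetilde{W}+\widetilde{b}y-e_n)$ ($e_n$ the all-ones vector) and $\mathcal{J}_1:=\{j: 0<\omega_j<C\}$. $\mathcal{I}$ is the identity on $\mathbb{R}^{p\times q}$ and $\mathcal{G}$ is any element of the Clarke generalized Jacobian $\partial\Pi_{\mathbb{B}_2^\tau}(\Lambda^k+\sigma\widetilde{W})$ of the metric projection onto $\mathbb{B}_2^\tau$. Self-adjointness/positive definiteness are with respect to the trace inner product. *)

(* Defs.v *)
From mathcomp Require Import all_boot all_order all_algebra.
From mathcomp Require Import all_classical all_reals all_analysis.
Import numFieldNormedType.Exports.
Set Implicit Arguments. Unset Strict Implicit. Unset Printing Implicit Defensive.
Import Order.TTheory GRing.Theory Num.Theory.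
Local Open Scope ring_scope.
Local Open Scope classical_set_scope.

Section Defs.
Variables (R : realType) (p q n : nat).

Definition finner (X Y : 'M[R]_(p, q)) : R := \tr (X^T *m Y).

Definition vnorm2 (m : nat) (v : 'cV[R]_m) : R := Num.sqrt (\sum_i (v i 0) ^+ 2).

Definition specnorm (X : 'M[R]_(p, q)) : R :=
  sup [set vnorm2 (X *m v) | v in [set v : 'cV[R]_q | vnorm2 v = 1]].

Definition specball (tau : R) : set 'M[R]_(p, q) := [set X | specnorm X <= tau].

Definition is_metric_proj (K : set 'M[R]_(p, q)) (Pi : 'M[R]_(p, q) -> 'M[R]_(p, q)) :=
  forall Z, K (Pi Z) /\
    forall X, K X -> finner (Z - Pi Z) (Z - Pi Z) <= finner (Z - X) (Z - X).

Definition Bsubdiff (F : 'M[R]_(p, q) -> 'M[R]_(p, q)) (x : 'M[R]_(p, q))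
    (G : 'M[R]_(p, q) -> 'M[R]_(p, q)) : Prop :=
  exists u : nat -> 'M[R]_(p, q),
    u @ \oo --> x /\ (forall k, differentiable F (u k)) /\
    forall H, (fun k => 'd F (u k) H) @ \oo --> G H.

Definition clarke_jac (F : 'M[R]_(p, q) -> 'M[R]_(p, q)) (x : 'M[R]_(p, q))
    (G : 'M[R]_(p, q) -> 'M[R]_(p, q)) : Prop :=
  exists (m : nat) (lam : 'I_m -> R) (Gs : 'I_m -> 'M[R]_(p, q) -> 'M[R]_(p, q)),
    [/\ forall i, 0 <= lam i, \sum_i lam i = 1,
        forall i, Bsubdiff F x (Gs i) &
        forall H, G H = \sum_i lam i *: Gs i H].

Definition Aop (X : 'I_n -> 'M[R]_(p, q)) (y : 'I_n -> R) (W : 'M[R]_(p, q)) : 'I_n -> R :=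
  fun j => finner (y j *: X j) W.

Definition Aadj (J : {set 'I_n}) (X : 'I_n -> 'M[R]_(p, q)) (y : 'I_n -> R)
    (z : 'I_n -> R) : 'M[R]_(p, q) :=
  \sum_(j in J) (z j * y j) *: X j.

Definition omega (X : 'I_n -> 'M[R]_(p, q)) (y : 'I_n -> R) (lamk : 'I_n -> R)
    (sigma : R) (Wt : 'M[R]_(p, q)) (bt : R) : 'I_n -> R :=
  fun j => - lamk j - sigma * (Aop X y Wt j + bt * y j - 1).

Definition J1 (C : R) (om : 'I_n -> R) : {set 'I_n} :=
  [set j | (0 < om j) && (om j < C)].

Definition Vtilde (X : 'I_n -> 'M[R]_(p, q)) (y : 'I_n -> R) (J : {set 'I_n})
    (sigma rho : R) (G : 'M[R]_(p, q) -> 'M[R]_(p, q)) (W : 'M[R]_(p, q)) : 'M[R]_(p, q) :=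
  W + sigma *: G W +
  (if J == finset.set0 then 0 else
     sigma *: Aadj J X y (Aop X y W)
     - (sigma ^+ 2 / (sigma * #|J|%:R + rho)) *:
         Aadj J X y (fun j => y j * \sum_(i in J) y i * Aop X y W i)).

End Defs.

(* Main.v *)
Require Import Defs.
From mathcomp Require Import all_boot all_order all_algebra.
From mathcomp Require Import all_classical all_reals all_analysis.
From mathcomp Require Import ring lra.
Import numFieldNormedType.Exports.
Import Order.TTheory GRing.Theory Num.Theory.
Local Open Scope ring_scope.

Section Helpers.
Local Open Scope classical_set_scope.
Section Fin.
Variables (R : realType) (p q : nat).
Local Notation E := 'M[R]_(p,q).

Lemma finnerE (X Y : E) : finner X Y = \sum_j \sum_i X i j * Y i j.
Proof. by rewrite /finner /mxtrace; apply: eq_bigr => j _; rewrite !mxE; apply: eq_bigr => i _; rewrite mxE. Qed.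

Lemma finnerC (X Y : E) : finner X Y = finner Y X.
Proof. by rewrite !finnerE; apply: eq_bigr => j _; apply: eq_bigr => i _; rewrite mulrC. Qed.

Lemma finnerDr (X Y Z : E) : finner X (Y + Z) = finner X Y + finner X Z.
Proof. rewrite !finnerE -big_split; apply: eq_bigr => j _; rewrite -big_split; apply: eq_bigr => i _; by rewrite mxE mulrDr. Qed.

Lemma finnerZr (X Y : E) a : finner X (a *: Y) = a * finner X Y.
Proof. rewrite !finnerE mulr_sumr; apply: eq_bigr => j _; rewrite mulr_sumr; apply: eq_bigr => i _; by rewrite mxE mulrCA. Qed.

Lemma finner0r (X : E) : finner X 0 = 0.
Proof. by rewrite -(scale0r 0) finnerZr mul0r. Qed.

Lemma finnerNr (X Y : E) : finner X (- Y) = - finner X Y.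
Proof. by rewrite -scaleN1r finnerZr mulN1r. Qed.

Lemma finnerBr (X Y Z : E) : finner X (Y - Z) = finner X Y - finner X Z.
Proof. by rewrite finnerDr finnerNr. Qed.

Lemma finnerDl (X Y Z : E) : finner (Y + Z) X = finner Y X + finner Z X.
Proof. by rewrite !(finnerC _ X) finnerDr. Qed.
Lemma finnerZl (X Y : E) a : finner (a *: Y) X = a * finner Y X.
Proof. by rewrite !(finnerC _ X) finnerZr. Qed.
Lemma finner0l (X : E) : finner 0 X = 0.
Proof. by rewrite finnerC finner0r. Qed.
Lemma finnerNl (X Y : E) : finner (- Y) X = - finner Y X.
Proof. by rewrite !(finnerC _ X) finnerNr. Qed.
Lemma finnerBl (X Y Z : E) : finner (Y - Z) X = finner Y X - finner Z X.
Proof. by rewrite !(finnerC _ X) finnerBr. Qed.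

Lemma finner_sumr (I : finType) (P : pred I) (X : E) (F : I -> E) :
  finner X (\sum_(i | P i) F i) = \sum_(i | P i) finner X (F i).
Proof. by apply: (big_morph _ (finnerDr X) (finner0r X)). Qed.

Lemma finner_ge0 (X : E) : 0 <= finner X X.
Proof. rewrite finnerE; apply: sumr_ge0 => j _; apply: sumr_ge0 => i _; exact: mulr_ge0_le0 || by rewrite -expr2 sqr_ge0. Qed.

Lemma finner_gt0 (X : E) : X != 0 -> 0 < finner X X.
Proof.
move=> hX; rewrite lt_neqAle finner_ge0 andbT; apply/negP => /eqP h.
move/negP: hX; apply; apply/eqP/matrixP => i j; rewrite mxE.
move: h; rewrite finnerE => /esym/eqP; rewrite psumr_eq0; last first.
  by move=> k _; apply: sumr_ge0 => l _; rewrite -expr2 sqr_ge0.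
move=> /allP /(_ j (mem_index_enum _)) /implyP /(_ isT) /eqP.
move/eqP; rewrite psumr_eq0; last by move=> l _; rewrite -expr2 sqr_ge0.
by move=> /allP /(_ i (mem_index_enum _)) /implyP /(_ isT); rewrite mulf_eq0 orbb => /eqP.
Qed.

Lemma finner_cvg (T : Type) (F : set_system T) (FF : Filter F) (f : T -> E) (l W : E) :
  f @ F --> l -> (fun t => finner (f t) W) @ F --> finner l W.
Proof.
move=> fl; under eq_cvg do rewrite finnerE; rewrite finnerE.
apply: cvg_big => //; first exact: add_continuous.
move=> j _; apply: cvg_big => //; first exact: add_continuous.
move=> i _; apply: cvgMl.
exact: (cvg_comp _ _ fl (@coord_continuous R p q i j l)).
Qed.
End Fin.

Section Core.
Variables (R : realType) (p q : nat).
Local Notation E := 'M[R]_(p,q).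
Variables (Pi : E -> E) (psi : E -> R).
Hypothesis hpsi : forall w z : E, finner (Pi z) (w - z) <= psi w - psi z.

Lemma path_ineq (z : nat -> E) N :
  \sum_(i < N) finner (Pi (z i)) (z i.+1 - z i) <= psi (z N) - psi (z 0).
Proof.
elim: N => [|N IH]; first by rewrite big_ord0 subrr.
rewrite big_ord_recr /=.
have -> : psi (z N.+1) - psi (z 0) = (psi (z N) - psi (z 0)) + (psi (z N.+1) - psi (z N)).
  by ring.
exact: lerD.
Qed.

Variables (x : E) (N : nat).
Hypothesis N0 : (0 < N)%N.

Definition cc (i : nat) : R := i%:R / N%:R.

Definition side (u h : E) (s : R) : R :=
  \sum_(i < N) finner (s^-1 *: (Pi (s *: (u + cc i *: h) + x) - Pi x)) (N%:R^-1 *: h).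

Lemma NR0 : N%:R != 0 :> R.
Proof. by rewrite pnatr_eq0 -lt0n. Qed.

Lemma side_path (u h : E) (s : R) : s != 0 ->
  s ^+ 2 * side u h s <= psi (s *: (u + h) + x) - psi (s *: u + x) - s * finner (Pi x) h.
Proof.
move=> s0.
pose z i := s *: (u + cc i *: h) + x.
have zN : z N = s *: (u + h) + x by rewrite /z /cc divff ?NR0 // scale1r.
have z0 : z 0%N = s *: u + x by rewrite /z /cc mul0r scale0r addr0.
have zS i : z i.+1 - z i = (s / N%:R) *: h.
  rewrite /z opprD addrACA subrr addr0 -scalerBr opprD addrACA subrr add0r -scalerBl /cc -mulrBl -addn1 natrD addrAC subrr add0r mul1r.
  by rewrite scalerA.
have := path_ineq z N; rewrite zN z0 => H.
apply: le_trans _ (lerB H (lexx _)).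
rewrite le_eqVlt; apply/orP; left; apply/eqP.
rewrite /side mulr_sumr.
have -> : s * finner (Pi x) h = \sum_(i < N) finner (Pi x) ((s / N%:R) *: h).
  rewrite sumr_const card_ord finnerZr -mulr_natr; field; exact: NR0.
rewrite -sumrB; apply: eq_bigr => i _.
rewrite zS -finnerBl finnerZl finnerZr finnerZr.
rewrite /z.
have -> : s ^+ 2 * (s^-1 * (N%:R^-1 * finner (Pi (s *: (u + cc i *: h) + x) - Pi x) h))
   = s / N%:R * finner (Pi (s *: (u + cc i *: h) + x) - Pi x) h.
  by field; rewrite NR0 s0.
by [].
Qed.


Lemma sum_nat2 n : 2 * \sum_(i < n) (i%:R : R) = n%:R * (n%:R - 1).
Proof.
elim: n => [|n IH]; first by rewrite big_ord0 mulr0 mul0r.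
rewrite big_ord_recr /= mulrDr IH -addn1 natrD; ring.
Qed.

Lemma sum_cc : \sum_(i < N) cc i = (N%:R - 1) / 2.
Proof.
rewrite /cc -mulr_suml.
have H := sum_nat2 N.
have -> : \sum_(i < N) (i%:R : R) = N%:R * (N%:R - 1) / 2.
  by rewrite -H; field.
by field; rewrite NR0.
Qed.

Lemma dcvg (dx : differentiable Pi x) v :
  (fun h : R => h^-1 *: (Pi (h *: v + x) - Pi x)) @ 0^' --> 'd Pi x v.
Proof.
have := @diff_derivable _ _ _ Pi x v dx; rewrite /derivable.
by rewrite -deriveE.
Qed.

Definition SL (u h : E) := \sum_(i < N) finner ('d Pi x (u + cc i *: h)) (N%:R^-1 *: h).

Lemma side_cvg (dx : differentiable Pi x) u h : side u h @ 0^' --> SL u h.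
Proof.
rewrite /side /SL; apply: cvg_big => //; first exact: add_continuous.
move=> i _; apply: finner_cvg; exact: dcvg.
Qed.

Lemma SL_eq u h : SL u h = finner ('d Pi x u) h + (N%:R - 1) / (2 * N%:R) * finner ('d Pi x h) h.
Proof.
rewrite /SL.
under eq_bigr do rewrite linearD linearZ /= finnerDl finnerZl !finnerZr.
rewrite big_split /= sumr_const card_ord -mulr_suml sum_cc -mulr_natr.
by field; rewrite NR0.
Qed.


Lemma key (dx : differentiable Pi x) a b :
  finner ('d Pi x a) b - finner ('d Pi x b) a <=
  (finner ('d Pi x a) a + finner ('d Pi x b) b) / N%:R.
Proof.
pose tot s := side 0 a s + side a b s + side (a + b) (- a) s + side b (- b) s.
have Hle : \forall s \near 0^', tot s <= 0.
  near=> s.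
  have sn0 : s != 0 by near: s; exact: nbhs_dnbhs_neq.
  have H1 := side_path 0 a s sn0.
  have H2 := side_path a b s sn0.
  have H3 := side_path (a + b) (- a) s sn0.
  have H4 := side_path b (- b) s sn0.
  rewrite add0r in H1.
  have e3 : a + b + - a = b by rewrite addrC addKr.
  rewrite e3 finnerNr in H3.
  rewrite subrr finnerNr in H4.
  have : s ^+ 2 * tot s <= 0.
    rewrite /tot !mulrDr; lra.
  by rewrite pmulr_rle0 // exprn_even_gt0.
have Hc : tot s @[s --> 0^'] --> SL 0 a + SL a b + SL (a + b) (- a) + SL b (- b).
  rewrite /tot; apply: cvgD; [apply: cvgD; [apply: cvgD|]|]; exact: side_cvg.
have := cvgr_to_le Hc Hle.
rewrite !SL_eq !linearD !linearN linear0 /= !finnerDl !finnerNl !finnerNr !finner0l.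
set A := finner ('d Pi x a) a; set B := finner ('d Pi x b) b.
set C := finner ('d Pi x a) b; set D := finner ('d Pi x b) a.
have -> : (N%:R - 1) / (2 * N%:R) = 1 / 2 - 1 / 2 / N%:R :> R by field; rewrite NR0.
move=> H; have {}H := H (Proper_dnbhs_numFieldType 0).
rewrite -subr_le0; apply: le_trans H; rewrite le_eqVlt; apply/orP; left; apply/eqP.
by field; rewrite NR0.
Unshelve. all: by end_near.
Qed.
End Core.

Lemma archi_le (R : realType) (A K : R) :
  (forall N, (0 < N)%N -> A <= K / N%:R) -> A <= 0.
Proof.
move=> H; case: (lerP A 0) => // hA.
have K0 : 0 <= K / A.
  have := H 1%N isT; rewrite divr1 => hK.
  by apply: divr_ge0; [exact: (le_trans (ltW hA))|exact: ltW].
have hM := archi_boundP K0.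
set M := Num.Def.archi_bound (K / A) in hM.
have hM1 : K / A < M.+1%:R by apply: (lt_le_trans hM); rewrite ler_nat.
have := H M.+1 isT.
have n0 : 0 < M.+1%:R :> R by rewrite ltr0n.
rewrite ler_pdivlMr // => h1.
move: hM1; rewrite ltr_pdivrMr // => h2.
exfalso; move: h1 h2; rewrite (mulrC M.+1%:R); lra.
Qed.



Section Core2.
Variables (R : realType) (p q : nat).
Local Notation E := 'M[R]_(p,q).
Variables (Pi : E -> E) (psi : E -> R).
Hypothesis hpsi : forall w z : E, finner (Pi z) (w - z) <= psi w - psi z.

Lemma dsym x (dx : differentiable Pi x) a b :
  finner ('d Pi x a) b = finner ('d Pi x b) a.
Proof.
have h1 : finner ('d Pi x a) b - finner ('d Pi x b) a <= 0.
  apply: (@archi_le R _ (finner ('d Pi x a) a + finner ('d Pi x b) b)) => N N0.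
  exact: (@key R p q Pi psi hpsi x N N0 dx).
have h2 : finner ('d Pi x b) a - finner ('d Pi x a) b <= 0.
  apply: (@archi_le R _ (finner ('d Pi x b) b + finner ('d Pi x a) a)) => N N0.
  exact: (@key R p q Pi psi hpsi x N N0 dx).
lra.
Qed.

Lemma dpsd x (dx : differentiable Pi x) a : 0 <= finner ('d Pi x a) a.
Proof.
have := @key R p q Pi psi hpsi x 1 isT dx a 0.
rewrite linear0 finner0r finner0l divr1; lra.
Qed.

Lemma bsub_props x Gs (hB : Bsubdiff Pi x Gs) :
  (forall U W, finner (Gs U) W = finner (Gs W) U) /\ forall W, 0 <= finner (Gs W) W.
Proof.
case: hB => u [_ [du cv]]; split.
  move=> U W.
  have h1 : (fun k => finner ('d Pi (u k) U) W) @ \oo --> finner (Gs U) W.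
    by apply: finner_cvg; exact: cv.
  have h2 : (fun k => finner ('d Pi (u k) W) U) @ \oo --> finner (Gs W) U.
    by apply: finner_cvg; exact: cv.
  have e : (fun k => finner ('d Pi (u k) W) U) = (fun k => finner ('d Pi (u k) U) W).
    by apply: funext => k; exact: dsym.
  rewrite e in h2.
  have e1 := cvg_lim (@norm_hausdorff _ R^o) h1.
  have e2 := cvg_lim (@norm_hausdorff _ R^o) h2.
  by rewrite -e1 -e2.
move=> W.
have h1 : (fun k => finner ('d Pi (u k) W) W) @ \oo --> finner (Gs W) W.
  by apply: finner_cvg; exact: cv.
apply: (cvgr_to_ge h1).
near=> k; exact: dpsd.
Unshelve. all: by end_near.
Qed.

End Core2.

Section Alg.
Variables (R : realType) (p q n : nat).
Local Notation E := 'M[R]_(p,q).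

Lemma finner_Aadj (J : {set 'I_n}) (X : 'I_n -> E) (y z : 'I_n -> R) (U : E) :
  finner U (Aadj J X y z) = \sum_(j in J) z j * Aop X y U j.
Proof.
rewrite /Aadj finner_sumr; apply: eq_bigr => j _.
by rewrite finnerZr /Aop finnerZl (@finnerC R p q U) mulrA.
Qed.

Lemma cs (J : {set 'I_n}) (a y : 'I_n -> R) :
  (forall j, y j ^+ 2 = 1) -> J != finset.set0 ->
  (\sum_(j in J) y j * a j) ^+ 2 <= #|J|%:R * \sum_(j in J) a j * a j.
Proof.
move=> hy hJ.
set S := \sum_(j in J) y j * a j; set Aq := \sum_(j in J) a j * a j.
set k : R := #|J|%:R.
have k0 : 0 < k by rewrite /k ltr0n card_gt0.
set t := S / k.
have H : 0 <= \sum_(j in J) (a j - t * y j) ^+ 2.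
  by apply: sumr_ge0 => j _; exact: sqr_ge0.
have e : \sum_(j in J) (a j - t * y j) ^+ 2 = Aq - 2 * t * S + t ^+ 2 * k.
  transitivity (\sum_(j in J) (a j * a j - 2 * t * (y j * a j) + t ^+ 2)).
    apply: eq_bigr => j _.
    have -> : (a j - t * y j) ^+ 2 = a j * a j - 2 * t * (y j * a j) + t ^+ 2 * y j ^+ 2 by ring.
    by rewrite hy mulr1.
  rewrite big_split /= sumrB -mulr_sumr sumr_const.
  by rewrite /k mulr_natr.
rewrite e in H.
have e2 : Aq - 2 * t * S + t ^+ 2 * k = (k * Aq - S ^+ 2) / k.
  by rewrite /t; field; rewrite gt_eqF.
rewrite e2 in H.
have : 0 <= k * Aq - S ^+ 2.
  by rewrite -(@pmulr_rge0 _ k^-1) ?invr_gt0 // mulrC.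
by rewrite subr_ge0.
Qed.
End Alg.
End Helpers.
Arguments finnerC {R p q}.
Arguments finner_gt0 {R p q X}.

Theorem proposition3 (R : realType) (p q n : nat)
  (X : 'I_n -> 'M[R]_(p, q)) (y : 'I_n -> R) (C tau : R)
  (hy : forall i, y i = 1 \/ y i = -1) (hC : 0 < C) (htau : 0 < tau)
  (lamk : 'I_n -> R) (Lamk : 'M[R]_(p, q)) (sigma rho : R)
  (hsigma : 0 < sigma) (hrho : 0 <= rho)
  (Wt : 'M[R]_(p, q)) (bt : R)
  (Pi : 'M[R]_(p, q) -> 'M[R]_(p, q))
  (hPi : is_metric_proj (specball tau) Pi)
  (G : 'M[R]_(p, q) -> 'M[R]_(p, q))
  (hG : clarke_jac Pi (Lamk + sigma *: Wt) G) :
  let V := Vtilde X y (J1 C (omega X y lamk sigma Wt bt)) sigma rho G in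
  (forall U W, finner U (V W) = finner (V U) W) /\
  (forall W, W != 0 -> 0 < finner W (V W)).
Proof.
set J := J1 C (omega X y lamk sigma Wt bt).
move=> V.
pose psi z := finner z (Pi z) - finner (Pi z) (Pi z) / 2.
have hpsi w z : finner (Pi z) (w - z) <= psi w - psi z.
  have [_ hw] := hPi w; have [hz _] := hPi z; have := hw _ hz.
  rewrite !finnerBl !finnerBr /psi (finnerC (Pi w) w) (finnerC (Pi z) w) (finnerC (Pi z) z).
  lra.
have [Gsym Gpsd] : (forall U W, finner U (G W) = finner (G U) W) /\
                   (forall W, 0 <= finner W (G W)).
  case: hG => m [lam [Gs [l0 l1 hB hGe]]].
  split => [U W|W].
    rewrite !hGe finner_sumr (finnerC _ W) finner_sumr.
    apply: eq_bigr => i _; rewrite !finnerZr; congr (_ * _).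
    have [hs _] := @bsub_props R p q Pi psi hpsi _ _ (hB i).
    by rewrite finnerC hs finnerC.
  rewrite hGe finner_sumr; apply: sumr_ge0 => i _; rewrite finnerZr.
  apply: mulr_ge0 => //; rewrite finnerC.
  by have [_ hp] := @bsub_props R p q Pi psi hpsi _ _ (hB i); exact: hp.
set c := sigma ^+ 2 / (sigma * #|J|%:R + rho).
have VE U W : finner U (V W) = finner U W + sigma * finner U (G W) +
   (if J == finset.set0 then 0 else
      sigma * (\sum_(j in J) Aop X y W j * Aop X y U j) -
      c * ((\sum_(i in J) y i * Aop X y W i) * (\sum_(j in J) y j * Aop X y U j))).
  rewrite /V /Vtilde !finnerDr finnerZr; case: ifP => _; first by rewrite finner0r.
  rewrite finnerBr !finnerZr !finner_Aadj; congr (_ + (_ - c * _)).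
  rewrite mulr_sumr; apply: eq_bigr => j _; ring.
split.
  move=> U W; rewrite (finnerC (V U) W) !VE (finnerC U W) Gsym (finnerC (G U) W).
  congr (_ + _); case: ifP => // _; congr (_ * _ - _ * _).
    by apply: eq_bigr => j _; rewrite mulrC.
  by rewrite mulrC.
move=> W hW; rewrite VE.
have h1 := finner_gt0 hW.
have h2 : 0 <= sigma * finner W (G W) by apply: mulr_ge0; [exact: ltW|exact: Gpsd].
have h3 : 0 <= (if J == finset.set0 then 0 else
      sigma * (\sum_(j in J) Aop X y W j * Aop X y W j) -
      c * ((\sum_(i in J) y i * Aop X y W i) * (\sum_(j in J) y j * Aop X y W j))).
  case: ifP => hJ; first by [].
  have hJ' : J != finset.set0 by rewrite hJ.
  have hy2 j : y j ^+ 2 = 1 by case: (hy j) => ->; rewrite ?expr1n ?sqrrN ?expr1n.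
  have hc := @cs R n J (Aop X y W) y hy2 hJ'.
  set S := \sum_(i in J) y i * Aop X y W i in hc *.
  set Aq := \sum_(j in J) Aop X y W j * Aop X y W j in hc *.
  set k : R := #|J|%:R in hc *.
  have k0 : 0 < k by rewrite /k ltr0n card_gt0.
  have d0 : 0 < sigma * k + rho by apply: ltr_wpDr => //; exact: mulr_gt0.
  have c0 : 0 <= c by rewrite /c -/k; apply: divr_ge0; [exact: sqr_ge0|exact: ltW].
  have Aq0 : 0 <= Aq by apply: sumr_ge0 => j _; rewrite -expr2; exact: sqr_ge0.
  have h4 : c * (S * S) <= c * (k * Aq) by rewrite -expr2; exact: ler_wpM2l.
  have e : sigma * Aq - c * (k * Aq) = Aq * (sigma * rho / (sigma * k + rho)).
    by rewrite /c -/k; field; rewrite gt_eqF.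
  have h5 : 0 <= Aq * (sigma * rho / (sigma * k + rho)).
    apply: mulr_ge0 => //; apply: divr_ge0 => //; [apply: mulr_ge0 => //; exact: ltW|exact: ltW].
  rewrite subr_ge0; apply: le_trans h4 _; rewrite -subr_ge0 e; exact: h5.
apply: (lt_le_trans h1); rewrite -addrA lerDl; exact: addr_ge0 h2 h3.
Qed.
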